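(* Consider the closed-loop switching semilinear system $\Sigma_0=(X,\mathrm{PC},\phi)$ described in the context and suppose $\Sigma_0$ is USGES. Then for every $r>0$ there exist $\underline{c}_r,\overline{c}_r>0$ and a Lipschitz continuous functional $V_r:X\to\mathbb{R}_+$ such that $\underline{c}_r\|x\|\le V_r(x)\le\overline{c}_r\|x\|$ for all $x\in B_X(0,r)$, and $\overline{D}_qV_r(x)\le-\|x\|$ for all $x\in B_X(0,r)$ and $q\in\mathcal{Q}$.
   Context: $X,U$ are Banach spaces, $B_X(0,r)$ is the closed ball of radius $r$. $A$ is the infinitesimal generator of a $C_0$-group $(T_t)_{t\in\mathbb{R}}$ of bounded linear operators on $X$. $\mathcal{Q}$ is a nonempty set and for $q\in\mathcal{Q}$, $f_q:X\times U\to X$ is Lipschitz continuous with a Lipschitz constant $L_f>0$ independent of $q$ and $f_q(0,0)=0$. $K:X\to U$ is globally Lipschitz with $K(0)=0$. For $q\in\mathcal{Q}$ and $x_0\in X$, let $x(\cdot,x_0,q)$ be the unique continuous mild solution of $\dot x=Ax+f_q(x,K(x))$, i.e. $x(t,x_0,q)=T_tx_0+\int_0^tT_{t-s}f_q(x(s,x_0,q),K(x(s,x_0,q)))ds$, and set $T_q(t)x_0=x(t,x_0,q)$. $\mathrm{PC}$ is the set of piecewise constant $\sigma:\mathbb{R}_+\to\mathcal{Q}$; for $\sigma$ equal to $q_k$ on $[t_k,t_{k+1})$, $0=t_0<t_1<\cdots\to\infty$, define $\phi(t,x_0,\sigma)=T_{q_k}(t-t_k)T_{q_{k-1}}(t_k-t_{k-1})\cdots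 T_{q_0}(t_1)x_0$ for $t\in[t_k,t_{k+1})$. $\Sigma_0$ is USGES if for every $r>0$ there exist $M(r),\lambda(r)>0$ with $\|\phi(t,x,\sigma)\|\le M(r)e^{-\lambda(r)t}\|x\|$ for all $t\ge0$, $x\in B_X(0,r)$, $\sigma\in\mathrm{PC}$. For $q\in\mathcal{Q}$, $\overline{D}_qV(x)=\limsup_{h\downarrow0}\frac1h\big(V(T_q(h)x)-V(x)\big)$. *)

(* Defs.v *)
From Stdlib Require Import Reals.
From Coquelicot Require Import Coquelicot.
Open Scope R_scope.
Set Implicit Arguments.

Definition C0_group {X : NormedModule R_AbsRing} (T : R -> X -> X) : Prop :=
  (forall t x y, T t (plus x y) = plus (T t x) (T t y)) /\
  (forall t (a : R) x, T t (scal a x) = scal a (T t x)) /\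
  (forall t, exists M, forall x, norm (T t x) <= M * norm x) /\
  (forall x, T 0 x = x) /\
  (forall t s x, T (t + s) x = T t (T s x)) /\
  (forall x, filterlim (fun t => T t x) (locally 0) (locally x)).

Definition Lipschitz {X Y : NormedModule R_AbsRing} (g : X -> Y) : Prop :=
  exists L, 0 <= L /\ forall x y, norm (minus (g x) (g y)) <= L * norm (minus x y).

(* x : [0,oo) -> X is a continuous mild solution of  x' = A x + F x, x(0) = x0,
   where A generates T:  x(t) = T_t x0 + \int_0^t T_{t-s} F(x(s)) ds. *)
Definition mild_solution {X : NormedModule R_AbsRing}
  (T : R -> X -> X) (F : X -> X) (x0 : X) (x : R -> X) : Prop :=
  (forall t, 0 <= t ->
     filterlim x (within (fun s => 0 <= s) (locally t)) (locally (x t))) /\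
  (forall t, 0 <= t ->
     is_RInt (fun s => T (t - s) (F (x s))) 0 t (minus (x t) (T t x0))).

(* Piecewise constant switching signals: sigma = sw_q k on [sw_t k, sw_t (k+1)),
   with 0 = t_0 < t_1 < ... -> oo. *)
Record PC (Q : Type) : Type := mkPC {
  sw_t : nat -> R;
  sw_q : nat -> Q;
  sw_t0 : sw_t 0 = 0;
  sw_inc : forall k, sw_t k < sw_t (S k);
  sw_unb : forall M, exists k, M < sw_t k
}.

Fixpoint sw_state {X Q : Type} (Tq : Q -> R -> X -> X) (s : PC Q) (x0 : X) (k : nat) : X :=
  match k with
  | O => x0
  | S k' => Tq (sw_q s k') (sw_t s (S k') - sw_t s k') (sw_state Tq s x0 k')
  end.

Definition phi_is {X Q : Type} (Tq : Q -> R -> X -> X) (s : PC Q) (x0 : X) (t : R) (y : X) : Prop :=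
  exists k, sw_t s k <= t < sw_t s (S k) /\
            y = Tq (sw_q s k) (t - sw_t s k) (sw_state Tq s x0 k).

Definition USGES {X : NormedModule R_AbsRing} {Q : Type} (Tq : Q -> R -> X -> X) : Prop :=
  forall r, 0 < r -> exists M lam, 0 < M /\ 0 < lam /\
    forall (s : PC Q) (x : X) (t : R) (y : X), 0 <= t -> norm x <= r ->
      phi_is Tq s x t y -> norm y <= M * exp (- lam * t) * norm x.

(* Upper right Dini derivative along mode q:
   limsup_{h -> 0+} (V(T_q(h) x) - V(x)) / h
   = inf_{delta > 0} sup_{0 < h < delta} (...), an extended real. *)
Definition dini_upper {X Q : Type} (Tq : Q -> R -> X -> X) (V : X -> R) (q : Q) (x : X) : Rbar :=
  Rbar_glb (fun y => exists delta, 0 < delta /\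
    y = Rbar_lub (fun z => exists h, 0 < h < delta /\
                    z = Finite ((V (Tq q h x) - V x) / h))).

(* Main.v *)
Require Import Defs.
From Stdlib Require Import Reals.
From Coquelicot Require Import Coquelicot.
From Stdlib Require Import Lra Lia Classical IndefiniteDescription.
From Stdlib Require ssreflect.
Open Scope R_scope.

Lemma Riemann_sum_lin {V W : NormedModule R_AbsRing} (l : V -> W) (f : R -> V) ptd :
  is_linear l -> Riemann_sum (fun s => l (f s)) ptd = l (Riemann_sum f ptd).
Proof.
  intros Hl. induction ptd using SF_cons_ind.
  - unfold Riemann_sum; simpl. symmetry. apply (linear_zero l Hl).
  - rewrite !Riemann_sum_cons, IHptd.
    symmetry. etransitivity. apply (linear_plus l Hl). f_equal. apply (linear_scal l Hl).
Qed.

Lemma is_RInt_lin {V W : NormedModule R_AbsRing} (l : V -> W) (f : R -> V) a b I :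
  is_linear l -> is_RInt f a b I -> is_RInt (fun s => l (f s)) a b (l I).
Proof.
  intros Hl H. unfold is_RInt in *.
  apply filterlim_ext with (f := fun ptd => l (scal (sign (b-a)) (Riemann_sum f ptd))).
  { intros ptd. etransitivity. apply (linear_scal l Hl).
    f_equal. symmetry. apply Riemann_sum_lin. exact Hl. }
  eapply filterlim_comp; [exact H|]. apply linear_cont; exact Hl.
Qed.

Lemma my_le_eps (a b : R) : (forall e, 0 < e -> a <= b + e) -> a <= b.
Proof.
  intros H. destruct (Rle_or_lt a b) as [h|h]; auto.
  specialize (H ((a - b)/2) ltac:(lra)). lra.
Qed.

Lemma norm_scal_eq {V : NormedModule R_AbsRing} (l : R) (x : V) :
  norm (scal l x) = Rabs l * norm x.
Proof.
  apply Rle_antisym. apply (norm_scal l x).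
  destruct (Req_dec l 0) as [->|hl].
  { rewrite Rabs_R0, Rmult_0_l. apply norm_ge_0. }
  assert (E : x = scal (/ l) (scal l x)).
  { rewrite scal_assoc. change (mult (/l) l) with (/l * l). rewrite Rinv_l by exact hl.
    exact (eq_sym (scal_one x)). }
  assert (H : norm x <= Rabs (/l) * norm (scal l x)).
  { eapply Rle_trans; [|apply (norm_scal (/l) (scal l x))]. right. f_equal. exact E. }
  rewrite Rabs_inv in H.
  assert (0 < Rabs l) by (apply Rabs_pos_lt; auto).
  apply Rmult_le_compat_l with (r := Rabs l) in H; [|lra].
  rewrite <- Rmult_assoc, Rinv_r in H by lra. lra.
Qed.

Lemma plus_self {V : NormedModule R_AbsRing} (x : V) : plus x x = scal 2 x.
Proof.
  rewrite <- (scal_one x) at 1 2.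
  etransitivity. symmetry. apply (@scal_distr_r R_Ring). f_equal.
Qed.

Lemma norm_plus_self {V : NormedModule R_AbsRing} (x : V) : norm (plus x x) = 2 * norm x.
Proof.
  rewrite plus_self, norm_scal_eq, Rabs_pos_eq; lra.
Qed.

Lemma minus_def {G : AbelianGroup} (x y : G) : minus x y = plus x (opp y).
Proof. reflexivity. Qed.

Lemma plus_minus_l {G : AbelianGroup} (a b : G) : minus (plus a b) a = b.
Proof. rewrite minus_def, (plus_comm a b), <- plus_assoc, plus_opp_r, plus_zero_r. reflexivity. Qed.

Lemma minus_minus_l {G : AbelianGroup} (a b : G) : minus (minus a b) a = opp b.
Proof. rewrite !minus_def, (plus_comm a (opp b)), <- plus_assoc, plus_opp_r, plus_zero_r. reflexivity. Qed.

Lemma plus_minus_l' {V : NormedModule R_AbsRing} (a b : V) : minus (plus a b) a = b.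
Proof. exact (plus_minus_l a b). Qed.
Lemma minus_minus_l' {V : NormedModule R_AbsRing} (a b : V) : minus (minus a b) a = opp b.
Proof. exact (minus_minus_l a b). Qed.

Lemma minus_plus_minus {G : AbelianGroup} (a b : G) :
  minus (plus a b) (minus a b) = plus b b.
Proof.
  rewrite !minus_def, opp_plus, opp_opp, (plus_comm (opp a) b), plus_assoc,
    <- (plus_assoc a b b), (plus_comm a (plus b b)), <- plus_assoc, plus_opp_r, plus_zero_r.
  reflexivity.
Qed.

Lemma two_le {V : NormedModule R_AbsRing} (A B : V) :
  2 * norm B <= norm (plus A B) + norm (minus A B).
Proof.
  assert (E : plus B B = minus (plus A B) (minus A B)) by (symmetry; exact (minus_plus_minus A B)).
  rewrite <- norm_plus_self, E. rewrite <- (norm_opp (minus A B)). apply norm_triangle.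
Qed.

Lemma Bern (n : nat) : 1 + INR n / 3 <= (4/3) ^ n.
Proof.
  induction n. simpl; lra.
  rewrite S_INR. simpl.
  assert (0 <= INR n) by apply pos_INR. nra.
Qed.

Definition ncomplete (X : NormedModule R_AbsRing) : Prop :=
  forall u : nat -> X,
  (forall eps, 0 < eps -> exists N, forall m n, (N <= m)%nat -> (N <= n)%nat -> norm (minus (u m) (u n)) < eps) ->
  exists y, forall eps, 0 < eps -> exists N, forall n, (N <= n)%nat -> norm (minus (u n) y) < eps.

Lemma UBP {X : NormedModule R_AbsRing} {Y : NormedModule R_AbsRing} (HC : ncomplete X)
  (I : R -> Prop) (T : R -> X -> Y) :
  (forall s, I s -> is_linear (T s)) ->
  (forall x, exists B, forall s, I s -> norm (T s x) <= B) ->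
  exists M, 0 < M /\ forall s x, I s -> norm (T s x) <= M * norm x.
Proof.
  intros Hlin Hpt. apply NNPP. intros Hn.
  assert (Hgood : forall n : nat, exists p : R * R * X,
    I (fst (fst p)) /\ 4 ^ n <= snd (fst p) /\
    (forall v, norm (T (fst (fst p)) v) <= snd (fst p) * norm v) /\
    norm (snd p) <= 1 /\ 3/4 * snd (fst p) <= norm (T (fst (fst p)) (snd p))).
  { intros n.
    assert (Hex : exists s x, I s /\ 4 ^ n * norm x < norm (T s x)).
    { apply NNPP. intros Hc. apply Hn. exists (4 ^ n + 1). split.
      { assert (0 < 4 ^ n) by (apply pow_lt; lra). lra. }
      intros s x Is. apply Rnot_lt_le. intros Hlt. apply Hc. exists s, x. split; auto.
      assert (0 <= norm x) by apply norm_ge_0.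
      assert (0 < 4 ^ n) by (apply pow_lt; lra). nra. }
    destruct Hex as [s [x [Is Hsx]]].
    set (E := fun y => exists u : X, norm u <= 1 /\ y = norm (T s u)).
    assert (Hb : bound E).
    { destruct (linear_norm _ (Hlin s Is)) as [Ms [HMs HMs2]]. exists Ms.
      intros y [u [hu ->]]. specialize (HMs2 u).
      assert (0 <= norm u) by apply norm_ge_0. nra. }
    assert (Hne : exists y, E y).
    { exists (norm (T s zero)). exists zero. split; auto. eapply Rle_trans; [right; apply norm_zero | lra]. }
    destruct (completeness E Hb Hne) as [m [Hm1 Hm2]].
    assert (Hbound : forall v, norm (T s v) <= m * norm v).
    { intros v. destruct (Req_dec (norm v) 0) as [h0|h0].
      { apply norm_eq_zero in h0. subst v. rewrite (linear_zero _ (Hlin s Is)), norm_zero.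
        rewrite norm_zero. lra. }
      assert (hv : 0 < norm v) by (generalize (norm_ge_0 v); lra).
      set (u := scal (/ norm v) v).
      assert (hu : norm u = 1).
      { unfold u. rewrite norm_scal_eq, Rabs_pos_eq. field. lra. left. apply Rinv_0_lt_compat; lra. }
      assert (E (norm (T s u))) by (exists u; split; [lra|reflexivity]).
      apply Hm1 in H.
      unfold u in H. rewrite (linear_scal _ (Hlin s Is)), norm_scal_eq, Rabs_pos_eq in H.
      2: { left. apply Rinv_0_lt_compat; lra. }
      apply Rmult_le_compat_l with (r := norm v) in H; [|lra].
      rewrite <- Rmult_assoc, Rinv_r in H by lra. lra. }
    assert (hxpos : 0 < norm x).
    { destruct (Req_dec (norm x) 0) as [h0|h0].
      { apply norm_eq_zero in h0. subst x. rewrite (linear_zero _ (Hlin s Is)), !norm_zero in Hsx. lra. }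
      generalize (norm_ge_0 x); lra. }
    assert (hm : 4 ^ n < m).
    { specialize (Hbound x). apply Rmult_lt_reg_r with (norm x); [lra|]. lra. }
    assert (hm0 : 0 < m) by (assert (0 < 4 ^ n) by (apply pow_lt; lra); lra).
    assert (Hu : exists u, norm u <= 1 /\ 3/4 * m <= norm (T s u)).
    { apply NNPP. intros Hc. assert (Hub : is_upper_bound E (3/4 * m)).
      { intros y [u [hu ->]]. apply Rnot_lt_le. intros hlt. apply Hc. exists u. split; auto. lra. }
      apply Hm2 in Hub. lra. }
    destruct Hu as [u [hu1 hu2]].
    exists (s, m, u). simpl. repeat split; auto; lra. }
  pose (g := fun n => proj1_sig (constructive_indefinite_description _ (Hgood n))).
  pose (sn := fun n => fst (fst (g n))). pose (mn := fun n => snd (fst (g n))). pose (un := fun n => snd (g n)).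
  assert (Hg : forall n, I (sn n) /\ 4 ^ n <= mn n /\
    (forall v, norm (T (sn n) v) <= mn n * norm v) /\
    norm (un n) <= 1 /\ 3/4 * mn n <= norm (T (sn n) (un n))).
  { intros n. exact (proj2_sig (constructive_indefinite_description _ (Hgood n))). }
  clearbody g sn mn un.
  set (rr := fun n : nat => (/3) ^ n).
  pose (step := fun (k : nat) (x : X) =>
     let r := rr (S k) in let u := un (S k) in let T' := T (sn (S k)) in
     if Rle_dec (r * norm (T' u)) (norm (T' (plus x (scal r u))))
     then plus x (scal r u) else minus x (scal r u)).
  pose (xs := fix xs (n : nat) : X := match n with O => zero | S k => step k (xs k) end).
  assert (Hrr : forall n, 0 < rr n) by (intros; apply pow_lt; lra).
  assert (Hrr1 : forall n, rr (S n) = rr n / 3) by (intros; unfold rr; simpl; field).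
  assert (P1 : forall k, norm (minus (xs (S k)) (xs k)) <= rr (S k)).
  { intros k. change (xs (S k)) with (step k (xs k)). unfold step.
    destruct (Hg (S k)) as [_ [_ [_ [hu _]]]].
    destruct Rle_dec.
    - rewrite plus_minus_l'.
      rewrite norm_scal_eq, Rabs_pos_eq by (left; apply Hrr). specialize (Hrr (S k)). nra.
    - rewrite minus_minus_l'.
      rewrite norm_opp, norm_scal_eq, Rabs_pos_eq by (left; apply Hrr). specialize (Hrr (S k)). nra. }
  assert (HS : forall n, 0 <= mn n /\ 0 <= norm (T (sn n) (un n))).
  { intros n. destruct (Hg n) as [_ [h1 _]]. assert (0 < 4 ^ n) by (apply pow_lt; lra).
    split. lra. apply norm_ge_0. }
  assert (P2 : forall k, 3/4 * mn (S k) * rr (S k) <= norm (T (sn (S k)) (xs (S k)))).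
  { intros k. destruct (Hg (S k)) as [Is [_ [_ [hu hTu]]]].
    specialize (Hrr (S k)).
    change (xs (S k)) with (step k (xs k)). unfold step.
    set (r := rr (S k)) in *. set (u := un (S k)) in *. set (s := sn (S k)) in *.
    set (m := mn (S k)) in *.
    assert (hB : norm (T s (scal r u)) = r * norm (T s u)).
    { rewrite (linear_scal _ (Hlin s Is)), norm_scal_eq, Rabs_pos_eq; lra. }
    destruct Rle_dec as [h|h].
    - nra.
    - rewrite (linear_minus _ _ _ (Hlin s Is)).
      rewrite (linear_plus _ (Hlin s Is)) in h.
      set (A := T s (xs k)) in *. set (B := T s (scal r u)) in *.
      assert (H2 := two_le A B). nra. }
  assert (P3 : forall n d, norm (minus (xs (n + d)%nat) (xs n)) <= rr n / 2 - rr (n + d)%nat / 2).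
  { intros n d. induction d.
    - rewrite Nat.add_0_r, minus_eq_zero. eapply Rle_trans; [right; apply norm_zero|lra].
    - rewrite Nat.add_succ_r. rewrite (minus_trans (xs (n + d)%nat)).
      eapply Rle_trans. apply norm_triangle. specialize (P1 (n + d)%nat).
      rewrite Hrr1 in *. lra. }
  assert (Hdec : forall n d, rr (n + d)%nat <= rr n).
  { intros n d. induction d. rewrite Nat.add_0_r; lra. rewrite Nat.add_succ_r, Hrr1.
    specialize (Hrr (n + d)%nat). lra. }
  assert (P3' : forall n m, (n <= m)%nat -> norm (minus (xs m) (xs n)) <= rr n / 2).
  { intros n m hnm. replace m with (n + (m - n))%nat by lia. specialize (P3 n (m - n)%nat).
    specialize (Hrr (n + (m - n))%nat). lra. }
  assert (Hsym : forall a b : X, norm (minus a b) = norm (minus b a)).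
  { intros a b. rewrite <- norm_opp, opp_minus. reflexivity. }
  destruct (HC xs) as [y Hy].
  { intros eps heps. destruct (pow_lt_1_zero (/3) ltac:(rewrite Rabs_pos_eq; lra) eps heps) as [N HN].
    exists N. intros m n hm hn. specialize (HN N (le_n N)). rewrite Rabs_pos_eq in HN by (left; apply Hrr).
    fold (rr N) in HN.
    destruct (Nat.le_ge_cases n m) as [h|h].
    - eapply Rle_lt_trans. apply P3'. exact h. replace n with (N + (n - N))%nat by lia.
      specialize (Hdec N (n - N)%nat). specialize (Hrr N). lra.
    - rewrite Hsym. eapply Rle_lt_trans. apply P3'. exact h. replace m with (N + (m - N))%nat by lia.
      specialize (Hdec N (m - N)%nat). specialize (Hrr N). lra. }
  assert (P5 : forall n, norm (minus y (xs n)) <= rr n / 2).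
  { intros n. apply my_le_eps. intros e he. destruct (Hy e he) as [N HN].
    specialize (HN (max N n) (Nat.le_max_l _ _)).
    rewrite (minus_trans (xs (max N n))). eapply Rle_trans. apply norm_triangle.
    rewrite Hsym in HN. specialize (P3' n (max N n) (Nat.le_max_r _ _)). lra. }
  destruct (Hpt y) as [B HB].
  destruct (INR_unbounded (12 * B)) as [k hk].
  destruct (Hg (S k)) as [Is [hm4 [hbd _]]].
  specialize (HB _ Is). specialize (P2 k). specialize (P5 (S k)).
  assert (Hd := norm_triangle_inv (T (sn (S k)) y) (T (sn (S k)) (xs (S k)))).
  rewrite <- (linear_minus _ _ _ (Hlin _ Is)) in Hd.
  specialize (hbd (minus y (xs (S k)))).
  assert (hq : 4 ^ (S k) * rr (S k) = (4/3) ^ (S k)).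
  { unfold rr. rewrite <- Rpow_mult_distr. f_equal. }
  assert (hb := Bern (S k)). rewrite S_INR in hb.
  specialize (Hrr (S k)). specialize (HS (S k)).
  assert (Hd2 : norm (T (sn (S k)) (xs (S k))) - norm (T (sn (S k)) y) <= norm (T (sn (S k)) (minus y (xs (S k))))).
  { eapply Rle_trans; [|exact Hd]. rewrite Rabs_minus_sym. apply Rle_abs. }
  assert (mn (S k) * rr (S k) <= 4 * B) by nra.
  nra.
Qed.
Module Alg.
Import ssreflect.
Lemma mdef {G : AbelianGroup} (x y : G) : minus x y = plus x (opp y). Proof. reflexivity. Qed.

Lemma alg1 {V : NormedModule R_AbsRing} (A B C l : V) : plus (minus B C) l = minus A C -> l = minus A B.
Proof.
  intros H.
  have E : minus A B = minus (plus (minus B C) l) (minus B C).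
  { rewrite H !mdef opp_plus opp_opp -plus_assoc. f_equal.
    rewrite (plus_comm (opp B) C) plus_assoc plus_opp_l plus_zero_l. reflexivity. }
  rewrite E !mdef (plus_comm (plus _ (opp C)) l) -plus_assoc plus_opp_r plus_zero_r. reflexivity.
Qed.

Lemma alg2 {V : NormedModule R_AbsRing} (A B P Q : V) :
  minus A B = plus (minus P Q) (minus (minus A P) (minus B Q)).
Proof.
  rewrite !mdef !opp_plus !opp_opp.
  rewrite (plus_comm (opp B) Q) (plus_assoc (plus A (opp P)) Q (opp B)).
  rewrite -(plus_assoc A (opp P) Q) (plus_comm (opp P) Q) (plus_assoc A Q (opp P)).
  rewrite (plus_comm (plus P (opp Q))).
  rewrite -!plus_assoc. f_equal.
  rewrite (plus_comm Q) -!plus_assoc. f_equal.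
  rewrite plus_opp_l plus_zero_r (plus_comm (opp B) P) plus_assoc plus_opp_l plus_zero_l.
  reflexivity.
Qed.

Lemma norm_tri {V : NormedModule R_AbsRing} (a b c : V) :
  norm (minus a c) <= norm (minus a b) + norm (minus b c).
Proof. rewrite (minus_trans b). apply norm_triangle. Qed.

Lemma norm_sym {V : NormedModule R_AbsRing} (a b : V) : norm (minus a b) = norm (minus b a).
Proof. rewrite -norm_opp opp_minus. reflexivity. Qed.

Lemma norm_le_minus {V : NormedModule R_AbsRing} (a b : V) : norm a <= norm (minus a b) + norm b.
Proof.
  have E : a = plus (minus a b) b by rewrite mdef -plus_assoc plus_opp_l plus_zero_r.
  rewrite {1}E. apply norm_triangle.
Qed.

Lemma minus_zero {V : NormedModule R_AbsRing} (a : V) : minus a zero = a.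
Proof. apply minus_zero_r. Qed.

Lemma lin_minus {V W : NormedModule R_AbsRing} (l : V -> W) (a b : V) :
  is_linear l -> l (minus a b) = minus (l a) (l b).
Proof. intros H. apply linear_minus. exact H. Qed.

Lemma minus_zero_eq {V : NormedModule R_AbsRing} (a b : V) : minus a b = zero -> a = b.
Proof.
  intros H. have E : a = plus (minus a b) b by rewrite mdef -plus_assoc plus_opp_l plus_zero_r.
  rewrite E H plus_zero_l. reflexivity.
Qed.

Lemma norm_minus_le {V : NormedModule R_AbsRing} (a b : V) : norm (minus a b) <= norm a + norm b.
Proof. rewrite mdef -(norm_opp b). apply norm_triangle. Qed.
End Alg.

Definition pc_const {Q : Type} (q0 : Q) : PC Q.
Proof.
  refine (mkPC (fun k => INR k) (fun _ => q0) _ _ _).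
  - reflexivity.
  - intros k. rewrite S_INR. lra.
  - intros Mb. destruct (INR_unbounded Mb) as [n hn]. exists n. lra.
Defined.

Definition pc_cons {Q : Type} (q : Q) (h : R) (hh : 0 < h) (s : PC Q) : PC Q.
Proof.
  refine (mkPC (fun k => match k with O => 0 | S k => h + sw_t s k end)
               (fun k => match k with O => q | S k => sw_q s k end) _ _ _).
  - reflexivity.
  - intros k. destruct k. rewrite sw_t0. lra. generalize (sw_inc s k). lra.
  - intros Mb. destruct (sw_unb s (Mb - h)) as [k hk]. exists (S k). lra.
Defined.

Lemma state_cons {X Q : Type} (Tq : Q -> R -> X -> X) q h hh (s : PC Q) x k :
  sw_state Tq (pc_cons q h hh s) x (S k) = sw_state Tq s (Tq q h x) k.
Proof.
  induction k.
  - simpl. f_equal. rewrite sw_t0. ring.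
  - change (sw_state Tq (pc_cons q h hh s) x (S (S k))) with
      (Tq (sw_q s k) ((h + sw_t s (S k)) - (h + sw_t s k)) (sw_state Tq (pc_cons q h hh s) x (S k))).
    rewrite IHk. simpl. f_equal. ring.
Qed.

Lemma phi_cons {X Q : Type} (Tq : Q -> R -> X -> X) q h hh (s : PC Q) x t y :
  phi_is Tq s (Tq q h x) t y -> phi_is Tq (pc_cons q h hh s) x (t + h) y.
Proof.
  intros [k [[h1 h2] ->]]. exists (S k).
  change (sw_t (pc_cons q h hh s) (S k)) with (h + sw_t s k).
  change (sw_t (pc_cons q h hh s) (S (S k))) with (h + sw_t s (S k)).
  change (sw_q (pc_cons q h hh s) (S k)) with (sw_q s k).
  split. lra. rewrite state_cons. f_equal. ring.
Qed.

Lemma phi0 {X Q : Type} (Tq : Q -> R -> X -> X) (s : PC Q) x :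
  phi_is Tq s x 0 (Tq (sw_q s 0) 0 x).
Proof.
  exists O. assert (h := sw_inc s 0). rewrite sw_t0 in *. split. lra.
  simpl. f_equal. ring.
Qed.

Lemma lub_ub (E : R -> Prop) B z : (forall z, E z -> z <= B) -> E z -> z <= real (Lub_Rbar E).
Proof.
  intros HB Hz. destruct (Lub_Rbar_correct E) as [H1 H2].
  destruct (Lub_Rbar E) as [l| |] eqn:El.
  - apply (H1 z Hz).
  - specialize (H2 (Finite B) HB). contradiction.
  - specialize (H1 z Hz). contradiction.
Qed.

Lemma lub_le (E : R -> Prop) B z : (forall z, E z -> z <= B) -> E z -> real (Lub_Rbar E) <= B.
Proof.
  intros HB Hz. destruct (Lub_Rbar_correct E) as [H1 H2].
  destruct (Lub_Rbar E) as [l| |] eqn:El.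
  - apply (H2 (Finite B) HB).
  - specialize (H2 (Finite B) HB). contradiction.
  - specialize (H1 z Hz). contradiction.
Qed.

Lemma exp_small (u : R) : 0 <= u <= 1 -> exp (- u) <= 1 - u / 2.
Proof.
  intros hu. rewrite exp_Ropp. assert (h := exp_ineq1_le u). assert (hp := exp_pos u).
  apply Rmult_le_reg_l with (exp u); [lra|]. rewrite Rinv_r by lra. nra.
Qed.

Lemma ball_R (c e y : R) : ball c e y <-> Rabs (y - c) < e.
Proof. unfold ball; simpl; unfold AbsRing_ball, abs, minus, plus, opp; simpl. tauto. Qed.

Lemma minus_zero_eq_G {V : AbelianGroup} (a b : V) : minus a b = zero -> a = b.
Proof.
  intros H. transitivity (plus (minus a b) b).
  { rewrite minus_def, <- plus_assoc, plus_opp_l, plus_zero_r. reflexivity. }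
  rewrite H. apply plus_zero_l.
Qed.
Lemma minus_zero_eq {V : NormedModule R_AbsRing} (a b : V) : minus a b = zero -> a = b.
Proof. exact (minus_zero_eq_G a b). Qed.

Lemma complete_ncomplete (X : CompleteNormedModule R_AbsRing) : ncomplete X.
Proof.
  intros u Hu.
  destruct (proj1 (filterlim_locally_cauchy (F := eventually) u)) as [y Hy].
  { intros eps. destruct (Hu eps (cond_pos eps)) as [N HN].
    exists (fun n => (N <= n)%nat). split. exists N; auto.
    intros a b ha hb. exact (norm_compat1 (V := X) (u a) (u b) eps (HN b a hb ha)). }
  exists y. intros eps heps.
  assert (Hl := Hy _ (locally_le_locally_norm y _ (locally_norm_ball_norm y (mkposreal eps heps)))).
  destruct Hl as [N HN]. exists N. intros n hn. apply HN. exact hn.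
Qed.

Lemma normR (a b : R) : norm (minus a b) = Rabs (a - b). Proof. reflexivity. Qed.

Lemma exp_mono (x y : R) : x <= y -> exp x <= exp y.
Proof. intros h. destruct (Rle_lt_or_eq_dec _ _ h) as [h'|h']. left; apply exp_increasing; auto. subst; lra. Qed.

Lemma lip_aux (w1 w2 n k C : R) : 0 < k -> w1 <= w2 + C * n -> w2 <= w1 + C * n ->
  Rabs (k * w1 - k * w2) <= k * C * n.
Proof. intros hk h1 h2. apply Rabs_le. split; nra. Qed.

Lemma div_aux (num n h : R) : 0 < h -> num <= - h * n -> num / h <= - n.
Proof.
  intros hh H. unfold Rdiv. apply Rmult_le_reg_r with h; [lra|].
  rewrite Rmult_assoc, Rinv_l, Rmult_1_r by lra. nra.
Qed.

Theorem main_gen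
  (Xc : CompleteNormedModule R_AbsRing) (U : NormedModule R_AbsRing)
  (T : R -> CompleteNormedModule.NormedModule R_AbsRing Xc -> CompleteNormedModule.NormedModule R_AbsRing Xc) (HT : C0_group T)
  (Q : Type) (HQ : inhabited Q)
  (f : Q -> CompleteNormedModule.NormedModule R_AbsRing Xc -> U -> CompleteNormedModule.NormedModule R_AbsRing Xc) (Lf : R) (HLf : 0 < Lf)
  (Hf : forall q x y u v,
     norm (minus (f q x u) (f q y v)) <= Lf * (norm (minus x y) + norm (minus u v)))
  (Hf0 : forall q, f q zero zero = zero)
  (K : CompleteNormedModule.NormedModule R_AbsRing Xc -> U) (HK : Lipschitz K) (HK0 : K zero = zero)
  (Tq : Q -> R -> CompleteNormedModule.NormedModule R_AbsRing Xc -> CompleteNormedModule.NormedModule R_AbsRing Xc)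
  (Hsol : forall q x0, mild_solution T (fun x => f q x (K x)) x0 (fun t => Tq q t x0))
  (Hstab : USGES Tq) :
  forall r, 0 < r ->
  exists (cl cu : R) (V : CompleteNormedModule.NormedModule R_AbsRing Xc -> R),
    0 < cl /\ 0 < cu /\
    (forall x, 0 <= V x) /\ Lipschitz V /\
    (forall x, norm x <= r -> cl * norm x <= V x /\ V x <= cu * norm x) /\
    (forall x q, norm x <= r -> Rbar_le (dini_upper Tq V q x) (Finite (- norm x))).
Proof.
  set (X := CompleteNormedModule.NormedModule R_AbsRing Xc).
  intros r hr.
  destruct HT as [Tadd [Tscal [Tbd [T0 [Tgrp Tcont]]]]].
  assert (Tlin : forall t, is_linear (T t)).
  { intros t. apply Build_is_linear; auto. destruct (Tbd t) as [Mt HMt].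
    exists (Rabs Mt + 1). split. generalize (Rabs_pos Mt); lra.
    intros x. eapply Rle_trans. apply HMt. generalize (norm_ge_0 x) (Rle_abs Mt); nra. }
  assert (Tq0 : forall q x, Tq q 0 x = x).
  { intros q x. destruct (Hsol q x) as [_ H]. specialize (H 0 (Rle_refl 0)).
    assert (H0 := is_RInt_point (fun s => T (0 - s) (f q (Tq q s x) (K (Tq q s x)))) 0).
    apply (filterlim_locally_unique _ _ _ H) in H0.
    apply minus_zero_eq in H0. rewrite H0. apply T0. }
  assert (Tcontc : forall x c, filterlim (fun s => T s x) (locally c) (locally (T c x))).
  { intros x c.
    apply filterlim_ext with (f := fun s => T c (T (s - c) x)).
    { intros s. rewrite <- Tgrp. f_equal. ring. }
    apply (filterlim_comp _ _ _ (fun s => T (s - c) x) (T c) _ (locally x)).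
    2: apply (linear_cont (T c) x (Tlin c)).
    apply (filterlim_comp _ _ _ (fun s => s - c) (fun t => T t x) _ (locally 0)).
    2: apply Tcont.
    intros P [eps HP]. exists eps. intros y hy. apply HP. apply ball_R in hy; apply ball_R.
    replace (y - c - 0) with (y - c) by ring. exact hy. }
  assert (HM1 : exists M1, 0 < M1 /\ forall s x, 0 <= s <= 1 -> norm (T s x) <= M1 * norm x).
  { apply (UBP (complete_ncomplete Xc) (fun s => 0 <= s <= 1) T). intros; apply Tlin.
    intros x. destruct (bounded_continuity (fun s => T s x) 0 1) as [B HB].
    { intros; apply Tcontc. }
    exists B. intros s hs. left. apply HB; auto. }
  assert (HMR : forall R0, exists M, 1 <= M /\ forall s x, 0 <= s <= R0 -> norm (T s x) <= M * norm x).
  { destruct HM1 as [M1 [hM1 HM1]]. set (M1' := Rmax 1 M1).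
    assert (h1 : 1 <= M1') by apply Rmax_l. assert (h2 : M1 <= M1') by apply Rmax_r.
    assert (Hn : forall n : nat, forall s x, 0 <= s <= INR n -> norm (T s x) <= M1' ^ (S n) * norm x).
    { induction n; intros s x hs.
      - simpl in hs. eapply Rle_trans. apply HM1. lra. simpl. rewrite Rmult_1_r.
        apply Rmult_le_compat_r. apply norm_ge_0. lra.
      - destruct (Rle_or_lt s 1) as [hs1|hs1].
        + eapply Rle_trans. apply HM1. lra. apply Rmult_le_compat_r. apply norm_ge_0.
          eapply Rle_trans. apply h2. rewrite <- (pow_1 M1') at 1. apply Rle_pow. lra. lia.
        + replace s with (1 + (s - 1)) by ring. rewrite Tgrp.
          eapply Rle_trans. apply HM1. lra. rewrite S_INR in hs.
          specialize (IHn (s - 1) x ltac:(lra)).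
          change (M1' ^ S (S n)) with (M1' * M1' ^ (S n)). rewrite Rmult_assoc.
          apply Rle_trans with (M1' * norm (T (s - 1) x)).
          apply Rmult_le_compat_r. apply norm_ge_0. lra.
          apply Rmult_le_compat_l; lra. }
    intros R0. destruct (INR_unbounded R0) as [n hn]. exists (M1' ^ S n). split.
    apply pow_R1_Rle; lra. intros s x hs. apply Hn. lra. }
  destruct (Hstab r hr) as [M0 [lam [hM0 [hlam Hst]]]].
  set (a := lam / 2). assert (ha : 0 < a) by (unfold a; lra).
  set (tau := Rabs (ln M0) / a + 1).
  assert (htau : 0 < tau).
  { unfold tau. assert (0 <= Rabs (ln M0) / a) by (apply Rdiv_le_0_compat; [apply Rabs_pos|lra]). lra. }
  assert (htail : M0 * exp (- a * tau) <= 1).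
  { assert (E : a * tau = Rabs (ln M0) + a) by (unfold tau; field; lra).
    assert (h1 : exp (- a * tau) <= exp (- ln M0)).
    { destruct (Rle_lt_or_eq_dec _ _ (Rle_abs (ln M0))) as [h|h];
      [left; apply exp_increasing; lra | left; apply exp_increasing; lra]. }
    rewrite exp_Ropp, exp_ln in h1 by exact hM0.
    apply Rmult_le_compat_l with (r := M0) in h1; [|lra]. rewrite Rinv_r in h1; lra. }
  destruct HK as [LK [hLK HKL]].
  set (L' := Lf * (1 + LK)). assert (hL' : 0 < L') by (unfold L'; apply Rmult_lt_0_compat; lra).
  destruct (HMR tau) as [M [hM HM]].
  set (c := M * M * L'). assert (hc : 0 < c) by (unfold c; repeat apply Rmult_lt_0_compat; lra).
  set (dl := / (2 * c)). assert (hdl : 0 < dl) by (unfold dl; apply Rinv_0_lt_compat; lra).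
  assert (hcdl : c * dl = 1/2) by (unfold dl; field; lra).
  set (gam := 2 * c).
  assert (HF : forall q x y, norm (minus (f q x (K x)) (f q y (K y))) <= L' * norm (minus x y)).
  { intros q x y. eapply Rle_trans. apply Hf. specialize (HKL x y). unfold L'.
    generalize (norm_ge_0 (minus x y)); nra. }
  assert (Hrest : forall q x0 a0 t, 0 <= a0 <= t ->
     is_RInt (fun s => T (t - s) (f q (Tq q s x0) (K (Tq q s x0)))) a0 t
       (minus (Tq q t x0) (T (t - a0) (Tq q a0 x0)))).
  { intros q x0 a0 t [h0 h1]. destruct (Hsol q x0) as [_ Hi]. cbv beta in Hi.
    set (g := fun s => T (t - s) (f q (Tq q s x0) (K (Tq q s x0)))).
    assert (Ht : is_RInt g 0 t (minus (Tq q t x0) (T t x0))) by (apply Hi; lra).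
    assert (Ha := Hi a0 h0).
    assert (Ha' := is_RInt_lin (T (t - a0)) _ _ _ _ (Tlin (t - a0)) Ha).
    assert (Ha'' : is_RInt g 0 a0 (minus (T (t - a0) (Tq q a0 x0)) (T t x0))).
    { replace (minus (T (t - a0) (Tq q a0 x0)) (T t x0)) with (T (t - a0) (minus (Tq q a0 x0) (T a0 x0))).
      apply is_RInt_ext with (2 := Ha'). intros s _. unfold g. rewrite <- Tgrp. f_equal. ring.
      rewrite (Alg.lin_minus _ _ _ (Tlin _)). f_equal. rewrite <- Tgrp. f_equal. ring. }
    destruct (ex_RInt_Chasles_2 (V := Xc) g 0 a0 t (conj h0 h1) (ex_intro _ _ Ht)) as [l2 Hl2].
    assert (Hc := is_RInt_Chasles g 0 a0 t _ _ Ha'' Hl2).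
    assert (E := filterlim_locally_unique _ _ _ Ht Hc).
    apply eq_sym, Alg.alg1 in E. rewrite E in Hl2. exact Hl2. }
  assert (Hbdd : forall q x0 b, 0 <= b -> exists B, forall u, 0 <= u <= b -> norm (Tq q u x0) <= B).
  { intros q x0 b hb. destruct (Hsol q x0) as [Hc _].
    destruct (bounded_continuity (fun s => Tq q (Rmax 0 s) x0) 0 b) as [B HB].
    { intros s hs. cbv beta. rewrite (Rmax_right 0 s) by lra.
      apply (filterlim_comp _ _ _ (Rmax 0) (fun t => Tq q t x0) _ (within (fun t => 0 <= t) (locally s))).
      - intros P [eps HP]. exists eps. intros y hy. apply HP; [|apply Rmax_l].
        apply ball_R. pose proof (proj1 (ball_R s eps y) hy) as hy'. unfold Rmax. destruct Rle_dec.
        + exact hy'.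
        + rewrite Rabs_left1 in hy' by lra. rewrite Rabs_left1 by lra. lra.
      - apply Hc; lra. }
    exists B. intros u hu. specialize (HB u hu). cbv beta in HB. rewrite Rmax_right in HB by lra. lra. }
  assert (Hstep : forall q x0 y0 a0 b rho A, 0 <= a0 <= b -> b - a0 <= dl -> 0 <= rho -> rho + (b - a0) <= tau ->
     (forall r', 0 <= r' <= rho + (b - a0) -> norm (T r' (minus (Tq q a0 x0) (Tq q a0 y0))) <= A) ->
     forall r', 0 <= r' <= rho -> norm (T r' (minus (Tq q b x0) (Tq q b y0))) <= exp (gam * (b - a0)) * A).
  { intros q x0 y0 a0 b rho A [ha0 hab] hdlb hrho hrt HA.
    set (D := fun s => minus (Tq q s x0) (Tq q s y0)).
    assert (hA : 0 <= A).
    { eapply Rle_trans; [apply (norm_ge_0 (T 0 (minus (Tq q a0 x0) (Tq q a0 y0))))|]. apply (HA 0). lra. }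
    assert (Hcore : forall u r' S, a0 <= u <= b -> 0 <= r' -> r' + (u - a0) <= rho + (b - a0) ->
        (forall s, a0 <= s <= u -> norm (D s) <= S) -> norm (T r' (D u)) <= A + (u - a0) * (c * S)).
    { intros u r' S [hu1 hu2] hr' hr'u HS.
      assert (hS : 0 <= S) by (eapply Rle_trans; [apply (norm_ge_0 (D a0))|]; apply (HS a0); lra).
      assert (Ix := Hrest q x0 a0 u (conj ha0 hu1)).
      assert (Iy := Hrest q y0 a0 u (conj ha0 hu1)).
      assert (Imin := is_RInt_minus _ _ _ _ _ _ Ix Iy).
      assert (Ir := is_RInt_lin (T r') _ _ _ _ (Tlin r') Imin).
      assert (Hb : forall s, a0 <= s <= u -> norm (T r' (minus (T (u - s) (f q (Tq q s x0) (K (Tq q s x0))))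
                 (T (u - s) (f q (Tq q s y0) (K (Tq q s y0)))))) <= c * S).
      { intros s hs. eapply Rle_trans. apply HM. lra.
        rewrite <- (Alg.lin_minus _ _ _ (Tlin _)).
        apply Rle_trans with (M * (M * norm (minus (f q (Tq q s x0) (K (Tq q s x0))) (f q (Tq q s y0) (K (Tq q s y0)))))).
        { apply Rmult_le_compat_l; [lra|]. apply HM; lra. }
        specialize (HF q (Tq q s x0) (Tq q s y0)). specialize (HS s hs). unfold D in HS.
        assert (0 <= M * M) by nra.
        unfold c. rewrite <- Rmult_assoc. rewrite (Rmult_assoc (M * M)).
        apply Rmult_le_compat_l; [lra|]. eapply Rle_trans; [exact HF|]. apply Rmult_le_compat_l; lra. }
      assert (HJ := norm_RInt_le_const _ _ _ _ (c * S) hu1 Hb Ir).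
      assert (E : T r' (D u) = plus (T (r' + (u - a0)) (D a0)) (T r' (minus (minus (Tq q u x0) (T (u - a0) (Tq q a0 x0))) (minus (Tq q u y0) (T (u - a0) (Tq q a0 y0)))))).
      { unfold D. rewrite !(Alg.lin_minus _ _ _ (Tlin _)). rewrite !Tgrp. apply Alg.alg2. }
      rewrite E. eapply Rle_trans. apply norm_triangle.
      assert (HA' := HA (r' + (u - a0)) ltac:(lra)). unfold D. lra. }
    destruct (Hbdd q x0 b ltac:(lra)) as [Bx HBx].
    destruct (Hbdd q y0 b ltac:(lra)) as [By HBy].
    set (E := fun v => exists s, a0 <= s <= b /\ v = norm (D s)).
    assert (Hb : bound E).
    { exists (Bx + By). intros v [s [hs ->]]. unfold D. eapply Rle_trans. apply Alg.norm_minus_le.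
      specialize (HBx s ltac:(lra)). specialize (HBy s ltac:(lra)). lra. }
    assert (Hne : exists v, E v) by (exists (norm (D a0)); exists a0; split; [lra|reflexivity]).
    destruct (completeness E Hb Hne) as [Ss [HS1 HS2]].
    assert (HSle : forall s, a0 <= s <= b -> norm (D s) <= Ss).
    { intros s hs. apply HS1. exists s. split; auto. }
    assert (hSs : 0 <= Ss) by (eapply Rle_trans; [apply (norm_ge_0 (D a0))|]; apply HSle; lra).
    assert (Hup : Ss <= A + (b - a0) * (c * Ss)).
    { apply HS2. intros v [s [hs ->]].
      rewrite <- (T0 (D s)). eapply Rle_trans. apply (Hcore s 0 Ss); try lra.
      intros; apply HSle; lra.
      apply Rplus_le_compat_l, Rmult_le_compat_r; [|lra]. apply Rmult_le_pos; lra. }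
    intros r' hr'.
    eapply Rle_trans. apply (Hcore b r' Ss); try lra. exact HSle.
    set (uu := c * (b - a0)).
    assert (huu : 0 <= uu <= 1/2).
    { unfold uu. split. apply Rmult_le_pos; lra. rewrite <- hcdl. apply Rmult_le_compat_l; lra. }
    assert (hexp : 1 + 2 * uu <= exp (gam * (b - a0))).
    { replace (gam * (b - a0)) with (2 * uu) by (unfold uu, gam; ring). apply exp_ineq1_le. }
    replace ((b - a0) * (c * Ss)) with (uu * Ss) in * by (unfold uu; ring).
    assert (Ss <= 2 * A) by nra.
    nra. }
  assert (Hpiece : forall n : nat, forall q x0 y0 b rho A, 0 <= b <= INR n * dl -> 0 <= rho -> rho + b <= tau ->
     (forall r', 0 <= r' <= rho + b -> norm (T r' (minus x0 y0)) <= A) ->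
     forall r', 0 <= r' <= rho -> norm (T r' (minus (Tq q b x0) (Tq q b y0))) <= exp (gam * b) * A).
  { induction n; intros q x0 y0 b rho A hb hrho hrt HA r' hr'.
    - simpl in hb. assert (b = 0) by lra. subst b. rewrite !Tq0, Rmult_0_r, exp_0, Rmult_1_l.
      apply HA. lra.
    - destruct (Rle_or_lt b dl) as [hbd|hbd].
      + replace b with (b - 0) at 3 by ring.
        apply (Hstep q x0 y0 0 b rho A); try lra.
        intros r'' hr''. rewrite !Tq0. apply HA. lra.
      + set (a0 := b - dl).
        rewrite S_INR in hb.
        assert (IH := IHn q x0 y0 a0 (rho + dl) A ltac:(unfold a0; lra) ltac:(lra) ltac:(unfold a0; lra)
                     ltac:(intros r'' hr''; apply HA; unfold a0 in hr''; lra)).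
        assert (Hs := Hstep q x0 y0 a0 b rho (exp (gam * a0) * A) ltac:(unfold a0; lra) ltac:(unfold a0; lra)
                     hrho ltac:(unfold a0; lra) ltac:(intros r'' hr''; apply IH; unfold a0 in hr''; lra) r' hr').
        eapply Rle_trans. exact Hs. rewrite <- Rmult_assoc, <- exp_plus.
        right. f_equal. f_equal. unfold a0; ring. }
  assert (Hpiece' : forall q x0 y0 b rho A, 0 <= b -> 0 <= rho -> rho + b <= tau ->
     (forall r', 0 <= r' <= rho + b -> norm (T r' (minus x0 y0)) <= A) ->
     forall r', 0 <= r' <= rho -> norm (T r' (minus (Tq q b x0) (Tq q b y0))) <= exp (gam * b) * A).
  { intros q x0 y0 b rho A hb. destruct (INR_unbounded (b / dl)) as [n hn].
    apply (Hpiece n). split; auto. apply Rmult_lt_compat_r with (r := dl) in hn; [|lra].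
    unfold Rdiv in hn. rewrite Rmult_assoc, Rinv_l, Rmult_1_r in hn by lra. lra. }
  assert (Hnn : forall (s : PC Q) k, 0 <= sw_t s k).
  { intros s k. induction k. rewrite sw_t0; lra. generalize (sw_inc s k); lra. }
  assert (Hsw : forall (s : PC Q) x y k, sw_t s k <= tau -> forall r', 0 <= r' <= tau - sw_t s k ->
     norm (T r' (minus (sw_state Tq s x k) (sw_state Tq s y k))) <= exp (gam * sw_t s k) * (M * norm (minus x y))).
  { intros s x y k. induction k; intros hk r' hr'.
    - simpl. rewrite sw_t0 in *. rewrite Rmult_0_r, exp_0, Rmult_1_l. apply HM. lra.
    - assert (hinc := sw_inc s k). assert (hnn := Hnn s k). simpl.
      eapply Rle_trans.
      apply (Hpiece' _ _ _ (sw_t s (S k) - sw_t s k) (tau - sw_t s (S k)) (exp (gam * sw_t s k) * (M * norm (minus x y))));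
        try lra.
      + intros r'' hr''. apply IHk; lra.
      + rewrite <- Rmult_assoc, <- exp_plus. right. f_equal. f_equal. ring. }
  set (CL := exp (gam * tau) * M).
  assert (hCL : 0 < CL) by (unfold CL; apply Rmult_lt_0_compat; [apply exp_pos|lra]).
  assert (Hlip : forall (s : PC Q) x y k t, sw_t s k <= t < sw_t s (S k) -> t <= tau ->
     norm (minus (Tq (sw_q s k) (t - sw_t s k) (sw_state Tq s x k)) (Tq (sw_q s k) (t - sw_t s k) (sw_state Tq s y k)))
       <= CL * norm (minus x y)).
  { intros s x y k t ht htt. assert (hnn := Hnn s k).
    eapply Rle_trans; [right; apply f_equal; symmetry; apply T0|].
    eapply Rle_trans.
    apply (Hpiece' _ _ _ (t - sw_t s k) (tau - t) (exp (gam * sw_t s k) * (M * norm (minus x y)))); try lra.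
    + intros r'' hr''. apply Hsw; lra.
    + rewrite <- Rmult_assoc, <- exp_plus. unfold CL. rewrite Rmult_assoc.
      apply Rmult_le_compat_r. apply Rmult_le_pos; [lra|apply norm_ge_0].
      replace (gam * (t - sw_t s k) + gam * sw_t s k) with (gam * t) by ring.
      destruct (Rle_lt_or_eq_dec t tau htt) as [h|h];
        [left; apply exp_increasing; unfold gam; nra | rewrite h; right; reflexivity]. }
  destruct HQ as [q0].
  set (Ex := fun x z => exists (s : PC Q) t y, 0 <= t <= tau /\ phi_is Tq s x t y /\ z = exp (a * t) * norm y).
  set (W := fun x => real (Lub_Rbar (Ex x))).
  assert (Hzero : forall s t y, 0 <= t -> phi_is Tq s zero t y -> norm y = 0).
  { intros s t y ht hp.
    assert (H := Hst s zero t y ht ltac:(eapply Rle_trans; [right; apply norm_zero|lra]) hp).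
    assert (H' : norm y <= M0 * exp (- lam * t) * 0) by (eapply Rle_trans; [exact H|]; right; f_equal; apply norm_zero).
    rewrite Rmult_0_r in H'. generalize (norm_ge_0 y); lra. }
  assert (Hcorr : forall s x x' t y, 0 <= t <= tau -> phi_is Tq s x t y ->
     exists y', phi_is Tq s x' t y' /\ norm (minus y y') <= CL * norm (minus x x')).
  { intros s x x' t y ht [k [hk ->]]. exists (Tq (sw_q s k) (t - sw_t s k) (sw_state Tq s x' k)).
    split. exists k. split; auto. apply Hlip; lra. }
  set (Ca := exp (a * tau) * CL).
  assert (hCa : 0 < Ca) by (unfold Ca; apply Rmult_lt_0_compat; [apply exp_pos|lra]).
  assert (HExb : forall x z, Ex x z -> z <= Ca * norm x).
  { intros x z [s [t [y [ht [hp ->]]]]]. destruct (Hcorr s x zero t y ht hp) as [y' [hp' hy']].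
    assert (hy'' : norm (minus y y') <= CL * norm x) by (eapply Rle_trans; [exact hy'|]; right; f_equal; f_equal; apply Alg.minus_zero).
    clear hy'. assert (h0 := Hzero s t y' ltac:(lra) hp').
    assert (ny : norm y <= CL * norm x).
    { eapply Rle_trans. apply (Alg.norm_le_minus y y'). lra. }
    unfold Ca. rewrite Rmult_assoc. apply Rmult_le_compat.
    left; apply exp_pos. apply norm_ge_0. apply exp_mono. nra. exact ny. }
  assert (HEx0 : forall x, Ex x (norm x)).
  { intros x. exists (pc_const q0), 0, (Tq q0 0 x). split. lra. split.
    exact (phi0 Tq (pc_const q0) x). rewrite Rmult_0_r, exp_0, Rmult_1_l, Tq0. reflexivity. }
  assert (HWge : forall x, norm x <= W x).
  { intros x. apply lub_ub with (Ca * norm x); [apply HExb|apply HEx0]. }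
  assert (HWpos : forall x, 0 <= W x).
  { intros x. eapply Rle_trans; [apply (norm_ge_0 x)|apply HWge]. }
  assert (HWle : forall x B, (forall z, Ex x z -> z <= B) -> W x <= B).
  { intros x B HB. apply lub_le with (norm x); auto. }
  assert (HWball : forall x, norm x <= r -> W x <= M0 * norm x).
  { intros x hx. apply HWle. intros z [s [t [y [ht [hp ->]]]]].
    assert (H := Hst s x t y ltac:(lra) hx hp).
    assert (He : exp (a * t) * exp (- lam * t) <= 1).
    { rewrite <- exp_plus, <- exp_0. apply exp_mono. unfold a. nra. }
    assert (0 <= norm x) by apply norm_ge_0.
    assert (0 < exp (a * t)) by apply exp_pos. assert (0 < exp (- lam * t)) by apply exp_pos.
    apply Rle_trans with (exp (a * t) * (M0 * exp (- lam * t) * norm x)).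
    apply Rmult_le_compat_l; lra.
    replace (exp (a * t) * (M0 * exp (- lam * t) * norm x)) with (M0 * norm x * (exp (a * t) * exp (- lam * t))) by ring.
    assert (0 <= M0 * norm x) by nra. nra. }
  assert (HWlip : forall x x', W x <= W x' + Ca * norm (minus x x')).
  { intros x x'. apply HWle. intros z [s [t [y [ht [hp ->]]]]].
    destruct (Hcorr s x x' t y ht hp) as [y' [hp' hy']].
    assert (Hz' : exp (a * t) * norm y' <= W x').
    { apply lub_ub with (Ca * norm x'); [apply HExb|]. exists s, t, y'; auto. }
    assert (hy := Alg.norm_le_minus y y').
    assert (he : exp (a * t) <= exp (a * tau)) by (apply exp_mono; nra).
    assert (0 < exp (a * t)) by apply exp_pos.
    assert (0 <= norm (minus x x')) by apply norm_ge_0.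
    unfold Ca.
    apply Rle_trans with (exp (a * t) * norm y' + exp (a * t) * (CL * norm (minus x x'))).
    { rewrite <- Rmult_plus_distr_l. apply Rmult_le_compat_l; lra. }
    assert (exp (a * t) * (CL * norm (minus x x')) <= exp (a * tau) * (CL * norm (minus x x'))).
    { apply Rmult_le_compat_r; [|lra]. apply Rmult_le_pos; lra. }
    rewrite Rmult_assoc. lra. }
  assert (HWdec : forall x q h, norm x <= r -> 0 < h -> W (Tq q h x) <= exp (- a * h) * W x).
  { intros x q h hx hh. apply HWle. intros z [s [t [y [ht [hp ->]]]]].
    assert (hp2 := phi_cons Tq q h hh s x t y hp).
    replace (exp (a * t) * norm y) with (exp (- a * h) * (exp (a * (t + h)) * norm y))
      by (rewrite <- Rmult_assoc, <- exp_plus; f_equal; f_equal; ring).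
    apply Rmult_le_compat_l. left; apply exp_pos.
    destruct (Rle_or_lt (t + h) tau) as [hle|hlt].
    - apply lub_ub with (Ca * norm x); [apply HExb|]. exists (pc_cons q h hh s), (t + h), y.
      repeat split; auto; lra.
    - assert (H := Hst _ x (t + h) y ltac:(lra) hx hp2).
      eapply Rle_trans; [|apply HWge].
      assert (0 <= norm x) by apply norm_ge_0.
      assert (0 < exp (a * (t + h))) by apply exp_pos.
      apply Rle_trans with (exp (a * (t + h)) * (M0 * exp (- lam * (t + h)) * norm x)).
      apply Rmult_le_compat_l; lra.
      assert (He : exp (a * (t + h)) * exp (- lam * (t + h)) <= exp (- a * tau)).
      { rewrite <- exp_plus. apply exp_mono. unfold a in *. nra. }
      replace (exp (a * (t + h)) * (M0 * exp (- lam * (t + h)) * norm x))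
        with (M0 * (exp (a * (t + h)) * exp (- lam * (t + h))) * norm x) by ring.
      assert (M0 * (exp (a * (t + h)) * exp (- lam * (t + h))) <= 1).
      { eapply Rle_trans; [|exact htail]. apply Rmult_le_compat_l; lra. }
      nra. }
  exists (2 / a), (2 / a * M0), (fun x => 2 / a * W x).
  assert (h2a : 0 < 2 / a) by (apply Rdiv_lt_0_compat; lra).
  split; [exact h2a|]. split; [apply Rmult_lt_0_compat; lra|].
  split.
  { intros x. cbv beta. apply Rmult_le_pos; [lra|apply HWpos]. }
  split.
  { exists (2 / a * Ca). split. nra. intros x y. cbv beta. rewrite normR.
    assert (H1 := HWlip x y). assert (H2 := HWlip y x). rewrite Alg.norm_sym in H2.
    exact (lip_aux (W x) (W y) _ (2 / a) Ca h2a H1 H2). }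
  split.
  { intros x hx. cbv beta. split. apply Rmult_le_compat_l; [lra|apply HWge].
    rewrite Rmult_assoc. apply Rmult_le_compat_l; [lra|apply HWball; exact hx]. }
  intros x q hx.
  unfold dini_upper.
  match goal with |- Rbar_le (Rbar_glb ?E) _ => pose proof (proj2_sig (Rbar_ex_glb E)) as [Hg1 _] end.
  unfold Rbar_glb.
  eapply Rbar_le_trans. apply Hg1. exists (/ a). split. apply Rinv_0_lt_compat; lra. reflexivity.
  match goal with |- Rbar_le (Rbar_lub ?E) _ => pose proof (proj2_sig (Rbar_ex_lub E)) as [_ Hl2] end.
  unfold Rbar_lub. apply Hl2.
  intros z [h [hh ->]]. simpl.
  assert (Hd := HWdec x q h hx (proj1 hh)).
  assert (hah : 0 <= a * h <= 1).
  { split. nra. destruct hh as [hh1 hh2]. apply Rmult_lt_compat_l with (r := a) in hh2; [|lra].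
    rewrite Rinv_r in hh2; lra. }
  assert (Hs := exp_small (a * h) hah). replace (- (a * h)) with (- a * h) in Hs by ring.
  assert (HW := HWge x).
  assert (Hnum : 2 / a * W (Tq q h x) - 2 / a * W x <= - h * norm x).
  { assert (W (Tq q h x) - W x <= (exp (- a * h) - 1) * W x) by nra.
    assert ((exp (- a * h) - 1) * W x <= - (a * h / 2) * W x) by (apply Rmult_le_compat_r; [apply HWpos|lra]).
    assert (- (a * h / 2) * W x <= - (a * h / 2) * norm x) by (apply Rmult_le_compat_neg_l; [nra|apply HWge]).
    assert (E : 2 / a * W (Tq q h x) - 2 / a * W x = 2 / a * (W (Tq q h x) - W x)) by ring.
    rewrite E. apply Rle_trans with (2 / a * (- (a * h / 2) * norm x)).
    apply Rmult_le_compat_l; lra. right. field. lra. }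
  destruct hh as [hh1 hh2].
  exact (div_aux _ _ _ hh1 Hnum).
Qed.

Theorem lemma1
  (X U : CompleteNormedModule R_AbsRing)
  (T : R -> X -> X) (HT : C0_group T)
  (Q : Type) (HQ : inhabited Q)
  (f : Q -> X -> U -> X) (Lf : R) (HLf : 0 < Lf)
  (Hf : forall q x y u v,
     norm (minus (f q x u) (f q y v)) <= Lf * (norm (minus x y) + norm (minus u v)))
  (Hf0 : forall q, f q zero zero = zero)
  (K : X -> U) (HK : Lipschitz K) (HK0 : K zero = zero)
  (Tq : Q -> R -> X -> X)
  (Hsol : forall q x0, mild_solution T (fun x => f q x (K x)) x0 (fun t => Tq q t x0))
  (Hstab : USGES Tq) :
  forall r, 0 < r ->
  exists (cl cu : R) (V : X -> R),
    0 < cl /\ 0 < cu /\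
    (forall x, 0 <= V x) /\ Lipschitz V /\
    (forall x, norm x <= r -> cl * norm x <= V x /\ V x <= cu * norm x) /\
    (forall x q, norm x <= r -> Rbar_le (dini_upper Tq V q x) (Finite (- norm x))).
Proof.
  exact (main_gen X U T HT Q HQ f Lf HLf Hf Hf0 K HK HK0 Tq Hsol Hstab).
Qed.
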